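(* Let $\phi_C(t)=1/\cosh t$ (the hyperbolic-cosine characteristic function), whose Khintchine pair is $[0,m_C]$ with $m_C(dx)=\frac12\frac{|x|}{1+x^2}\frac{1}{\sinh(\pi|x|/2)}dx$. Its free analogue $\tilde\phi_C$ has Voiculescu transform $$V_{\tilde\phi_C}(it)=-it^2\int_0^\infty\log\cosh(s)\,e^{-ts}ds=i\big[1-t\beta(t/2)\big]=i\big[t\beta(t/2+1)-1\big],\qquad t>0.$$ Consequently, $\beta(s)+\beta(s+1)=1/s$ for all $s>0$.
   Context: $\beta(x):=\sum_{k=0}^\infty\frac{(-1)^k}{x+k}=\frac12[\psi(\frac{x+1}{2})-\psi(\frac x2)]$ for $x>0$, where $\psi=\Gamma'/\Gamma$ is the digamma function. For an infinitely divisible characteristic function $\phi$ with Khintchine exponent $\log\phi$, its free analogue $\tilde\phi$ is the $\boxplus$-infinitely divisible probability measure whose Voiculescu transform satisfies $V_{\tilde\phi}(it)=it^2\int_0^\infty\overline{\log\phi(s)}e^{-ts}ds$, $t>0$; if $\phi$ has Khintchine pair $[0,m]$ with $m$ symmetric, this equals $-it\int_{\mathbb{R}}\frac{1+x^2}{t^2+x^2}m(dx)$. *)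

(* Defs.v *)
From Stdlib Require Import Reals Lra ClassicalEpsilon.
Open Scope R_scope.

Definition beta_term (x : R) (k : nat) : R := (-1) ^ k / (x + INR k).

(* beta(x) := the sum of the series (chosen classically; for x > 0 the
   series converges, so this is its unique sum). *)
Definition beta (x : R) : R :=
  epsilon (inhabits 0) (fun l => infinite_sum (beta_term x) l).

Definition improper_integral_0_inf (f : R -> R) (l : R) : Prop :=
  exists pr : forall b : R, Riemann_integrable f 0 b,
    forall eps : R, eps > 0 ->
      exists B : R, forall b : R, b >= B -> Rabs (RiemannInt (pr b) - l) < eps.

(* Main.v *)
Require Import Defs.
From Stdlib Require Import Reals.
Open Scope R_scope.
From Stdlib Require Import Lra Lia ClassicalEpsilon.

Lemma inv_cv0 (x : R) : 0 < x -> Un_cv (fun k => / (x + INR k)) 0.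
Proof.
  intros hx eps he.
  destruct (archimed_cor1 eps he) as [N [HN HN0]].
  exists N; intros n hn.
  unfold Rdist. rewrite Rminus_0_r.
  assert (HNr : 0 < INR N) by (apply lt_0_INR; lia).
  assert (INR N <= INR n) by (apply le_INR; lia).
  assert (0 < x + INR n) by lra.
  rewrite Rabs_right by (apply Rle_ge; left; apply Rinv_0_lt_compat; lra).
  apply Rle_lt_trans with (/ INR N); [|exact HN].
  apply Rinv_le_contravar; lra.
Qed.

Lemma beta_sum (x : R) : 0 < x -> infinite_sum (beta_term x) (beta x).
Proof.
  intros hx. unfold beta.
  apply epsilon_spec.
  assert (Hd : Un_decreasing (fun k => / (x + INR k))).
  { intro n. rewrite S_INR. pose proof (pos_INR n).
    apply Rinv_le_contravar; lra. }
  destruct (alternated_series _ Hd (inv_cv0 x hx)) as [l Hl].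
  exists l. exact Hl.
Qed.

Lemma beta_shift_partial (s : R) : 0 < s -> forall n,
  sum_f_R0 (beta_term s) n + sum_f_R0 (beta_term (s+1)) n = 1/s - beta_term s (S n).
Proof.
  intros hs n. induction n as [|n IH].
  - simpl. unfold beta_term. simpl. field. lra.
  - simpl sum_f_R0.
    assert (E : beta_term (s+1) (S n) = - beta_term s (S (S n))).
    { unfold beta_term. rewrite !S_INR. simpl pow.
      pose proof (pos_INR n). field. lra. }
    rewrite E. lra.
Qed.

Lemma beta_rec (s : R) : 0 < s -> beta s + beta (s + 1) = 1 / s.
Proof.
  intros hs.
  pose proof (beta_sum s hs) as H1. pose proof (beta_sum (s+1) ltac:(lra)) as H2.
  assert (H3 : Un_cv (fun n => sum_f_R0 (beta_term s) n + sum_f_R0 (beta_term (s+1)) n) (beta s + beta (s+1))).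
  { apply CV_plus; assumption. }
  assert (H4 : Un_cv (fun n => sum_f_R0 (beta_term s) n + sum_f_R0 (beta_term (s+1)) n) (1/s)).
  { intros eps he. destruct (inv_cv0 s hs eps he) as [N HN].
    exists N. intros n hn. rewrite beta_shift_partial by exact hs.
    specialize (HN (S n) ltac:(lia)). unfold Rdist in *.
    unfold beta_term.
    replace (1 / s - (-1) ^ S n / (s + INR (S n)) - 1 / s) with (- ((-1) ^ S n * / (s + INR (S n)))) by (unfold Rdiv; ring).
    rewrite Rabs_Ropp, Rabs_mult, pow_1_abs, Rmult_1_l.
    rewrite Rminus_0_r in HN. exact HN. }
  exact (UL_sequence _ _ _ H3 H4).
Qed.

From Coquelicot Require Import Coquelicot.
Open Scope R_scope.

Definition cc (t : R) (k : nat) : R := t + 2 + 2 * INR k.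
Definition EE (t : R) (k : nat) (s : R) : R :=
  exp (- (cc t k * s)) / (1 + exp (- (2 * s))).
Definition JJ (t : R) (k : nat) (b : R) : R := RInt (EE t k) 0 b.

Lemma EE_cont t k x : continuous (EE t k) x.
Proof.
  apply (ex_derive_continuous (EE t k)). unfold EE.
  auto_derive. pose proof (exp_pos (-(2*x))). lra.
Qed.

Lemma EE_ex t k b : ex_RInt (EE t k) 0 b.
Proof. apply (ex_RInt_continuous (V:=R_CompleteNormedModule)). intros; apply EE_cont. Qed.

Lemma exp_int (c b : R) : 0 < c ->
  is_RInt (fun s => exp (- (c * s))) 0 b ((1 - exp (- (c * b))) / c).
Proof.
  intros hc.
  assert (H := is_RInt_derive (fun s => - exp (- (c * s)) / c) (fun s => exp (- (c * s))) 0 b).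
  replace ((1 - exp (- (c * b))) / c) with (minus (- exp (- (c * b)) / c) (- exp (- (c * 0)) / c)).
  2:{ rewrite Rmult_0_r, Ropp_0, exp_0. unfold minus, plus, opp; simpl. field. lra. }
  apply H.
  - intros x _. auto_derive; [lra|]. field. lra.
  - intros x _. apply (ex_derive_continuous (fun s => exp (- (c * s)))). auto_derive. auto.
Qed.

Lemma EE_rec t k s : 0 < t ->
  EE t k s = exp (- (cc t k * s)) - EE t (S k) s.
Proof.
  intros ht. unfold EE, cc. rewrite S_INR.
  replace (- ((t + 2 + 2 * (INR k + 1)) * s)) with (- ((t + 2 + 2 * INR k) * s) + - (2 * s)) by ring.
  rewrite exp_plus. pose proof (exp_pos (-(2*s))). field. lra.
Qed.

Lemma cc_pos t k : 0 < t -> 0 < cc t k.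
Proof. intros; unfold cc; pose proof (pos_INR k); lra. Qed.

Lemma JJ_rec t k b : 0 < t ->
  JJ t k b = (1 - exp (- (cc t k * b))) / cc t k - JJ t (S k) b.
Proof.
  intros ht. unfold JJ.
  rewrite (RInt_ext (EE t k) (fun s => minus (exp (- (cc t k * s))) (EE t (S k) s))).
  2:{ intros x _. rewrite EE_rec by exact ht. reflexivity. }
  rewrite (RInt_minus (V:=R_CompleteNormedModule)).
  - rewrite (is_RInt_unique _ _ _ _ (exp_int (cc t k) b (cc_pos t k ht))). reflexivity.
  - exists ((1 - exp (- (cc t k * b))) / cc t k). apply exp_int, cc_pos, ht.
  - apply EE_ex.
Qed.

Lemma JJ_nonneg t k b : 0 <= b -> 0 <= JJ t k b.
Proof.
  intros hb. unfold JJ. apply RInt_ge_0; [exact hb|apply EE_ex|].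
  intros x _. unfold EE. pose proof (exp_pos (-(cc t k * x))). pose proof (exp_pos (-(2*x))).
  apply Rlt_le, Rdiv_lt_0_compat; lra.
Qed.

Fixpoint psum (t b : R) (n : nat) : R :=
  match n with O => 0 | S m => psum t b m + (-1) ^ m * ((1 - exp (- (cc t m * b))) / cc t m) end.
Fixpoint qsum (t : R) (n : nat) : R :=
  match n with O => 0 | S m => qsum t m + (-1) ^ m / cc t m end.
Fixpoint rsum (t b : R) (n : nat) : R :=
  match n with O => 0 | S m => rsum t b m + (-1) ^ m * (exp (- (cc t m * b)) / cc t m) end.

Lemma JJ0_expand t b n : 0 < t -> JJ t 0 b = psum t b n + (-1) ^ n * JJ t n b.
Proof.
  intros ht. induction n as [|n IH].
  - simpl. ring.
  - rewrite IH. simpl psum. rewrite (JJ_rec t n b ht). simpl pow. ring.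
Qed.

Lemma psum_split t b n : 0 < t -> psum t b n = qsum t n - rsum t b n.
Proof.
  intros ht. induction n as [|n IH]; simpl; [ring|].
  rewrite IH. pose proof (cc_pos t n ht). field. lra.
Qed.

Lemma exp_le_mono x y : x <= y -> exp x <= exp y.
Proof. intros [H|H]; [left; apply exp_increasing; exact H|rewrite H; lra]. Qed.

Lemma rsum_bound t b n : 0 < t -> 0 <= b -> Rabs (rsum t b n) <= INR n * (exp (- (t * b)) / t).
Proof.
  intros ht hb. induction n as [|n IH]; cbn [rsum].
  - rewrite Rabs_R0. simpl. lra.
  - rewrite S_INR. eapply Rle_trans; [apply Rabs_triang|].
    rewrite Rabs_mult, pow_1_abs, Rmult_1_l.
    assert (Rabs (exp (- (cc t n * b)) / cc t n) <= exp (- (t * b)) / t).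
    { pose proof (cc_pos t n ht). rewrite Rabs_right.
      2:{ apply Rle_ge, Rlt_le, Rdiv_lt_0_compat; [apply exp_pos|lra]. }
      unfold Rdiv. apply Rmult_le_compat.
      - left; apply exp_pos.
      - left; apply Rinv_0_lt_compat; lra.
      - apply exp_le_mono. unfold cc. pose proof (pos_INR n). nra.
      - apply Rinv_le_contravar; [lra|]. unfold cc. pose proof (pos_INR n). lra. }
    nra.
Qed.


Definition gg (t s : R) : R := ln (cosh s) * exp (- (t * s)).
Definition AA (t b : R) : R := - exp (- (t * b)) * ln ((exp b + exp (- b))/2) / t + (1 - exp (- (t * b))) / t ^ 2.
Definition GG (t b : R) : R := AA t b - 2 / t * JJ t 0 b.

Lemma JJ_deriv t x : is_derive (JJ t 0) x (EE t 0 x).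
Proof.
  apply (is_derive_RInt (V:=R_NormedModule) (EE t 0) (JJ t 0) 0).
  - exists (mkposreal 1 Rlt_0_1). intros y _. apply (RInt_correct (V:=R_CompleteNormedModule)). apply EE_ex.
  - apply EE_cont.
Qed.

Lemma AA_deriv t x : 0 < t -> is_derive (AA t) x (gg t x + 2 / t * EE t 0 x).
Proof.
  intros ht.
  assert (Hx := exp_pos x). assert (Hmx := exp_pos (-x)).
  assert (H : exists d, is_derive (AA t) x d /\ d = gg t x + 2 / t * EE t 0 x).
  { eexists; split. unfold AA. auto_derive. lra. reflexivity.
    unfold gg, EE, cc, cosh. simpl INR.
    replace (- ((t + 2 + 2 * 0) * x)) with (- (t * x) + - x + - x) by ring.
    replace (- (2 * x)) with (- x + - x) by ring.
    rewrite !exp_plus. rewrite !exp_Ropp. unfold Rdiv.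
    set (L := ln ((exp x + / exp x) * / 2)). assert (HY := exp_pos (t*x)). set (Y := exp (t*x)). set (X := exp x).
    assert (0 < / X) by (apply Rinv_0_lt_compat; exact Hx).
    match goal with |- ?a = ?b => change (@eq R a b) end.
    field. unfold X, Y in *. repeat split; try lra; nra. }
  destruct H as [d [H1 H2]]. rewrite <- H2. exact H1.
Qed.

Lemma GG_deriv t x : 0 < t -> is_derive (GG t) x (gg t x).
Proof.
  intros ht.
  assert (H := is_derive_minus _ _ x _ _ (AA_deriv t x ht) (is_derive_scal _ x (2/t) _ (JJ_deriv t x))).
  apply (is_derive_ext _ (GG t)) in H; [|intro; reflexivity].
  replace (gg t x) with (minus (gg t x + 2 / t * EE t 0 x) (2 / t * EE t 0 x)).
  exact H. unfold minus, plus, opp; simpl. ring.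
Qed.

Lemma gg_cont t x : continuous (gg t) x.
Proof.
  apply (ex_derive_continuous (gg t)). unfold gg, cosh. auto_derive.
  pose proof (exp_pos x); pose proof (exp_pos (-x)). lra.
Qed.

Lemma gg_ex t b : ex_RInt (gg t) 0 b.
Proof. apply (ex_RInt_continuous (V:=R_CompleteNormedModule)). intros; apply gg_cont. Qed.

Lemma GG_0 t : GG t 0 = 0.
Proof.
  unfold GG, AA, JJ. rewrite RInt_point. rewrite Ropp_0, Rmult_0_r, exp_0.
  replace ((1 + 1) / 2) with 1 by field. rewrite ln_1. rewrite Ropp_0, exp_0. change (zero : R) with 0. unfold Rdiv; ring.
Qed.

Lemma RInt_gg t b : 0 < t -> RInt (gg t) 0 b = GG t b.
Proof.
  intros ht.
  rewrite (is_RInt_unique _ _ _ _ (is_RInt_derive (GG t) (gg t) 0 b (fun x _ => GG_deriv t x ht) (fun x _ => gg_cont t x))).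
  rewrite GG_0. unfold minus, plus, opp; simpl. ring.
Qed.


Lemma ln_le_mono x y : 0 < x -> x <= y -> ln x <= ln y.
Proof. intros h [H|H]; [left; apply ln_increasing; lra|rewrite H; lra]. Qed.

Lemma lncosh_bounds b : 0 <= b -> 0 <= ln (cosh b) <= b.
Proof.
  intros hb. unfold cosh.
  assert (HX := exp_pos b). assert (He : exp (-b) = / exp b) by apply exp_Ropp.
  assert (Hi : exp (-b) <= exp b) by (apply exp_le_mono; lra).
  assert (Hm : exp b * exp (-b) = 1) by (rewrite He; field; lra).
  split.
  - rewrite <- ln_1. apply ln_le_mono; [lra|].
    assert (0 <= (exp b - 1) * (exp b - 1) * exp (-b)).
    { apply Rmult_le_pos; [pose proof (Rle_0_sqr (exp b - 1)); unfold Rsqr in *; lra|pose proof (exp_pos (-b)); lra]. }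
    nra.
  - apply Rle_trans with (ln (exp b)); [|rewrite ln_exp; lra].
    apply ln_le_mono; [pose proof (exp_pos (-b)); lra|lra].
Qed.

Lemma exp_neg_bound x : 0 < x -> exp (- x) <= 4 / (x * x).
Proof.
  intros hx.
  assert (H1 := exp_ineq1_le (x/2)).
  assert (H2 : exp x = exp (x/2) * exp (x/2)) by (rewrite <- exp_plus; f_equal; field).
  rewrite exp_Ropp, H2.
  assert (x/2 <= exp (x/2)) by lra.
  assert (0 < x / 2) by lra.
  replace (4 / (x*x)) with (/ ((x/2)*(x/2))) by (field; lra).
  apply Rinv_le_contravar; [nra|]. apply Rmult_le_compat; lra.
Qed.

Lemma JJn_bound t n b : 0 < t -> 0 <= b -> 0 <= JJ t n b <= / cc t n.
Proof.
  intros ht hb. split; [apply JJ_nonneg; exact hb|].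
  rewrite JJ_rec by exact ht. pose proof (JJ_nonneg t (S n) b hb).
  pose proof (cc_pos t n ht). pose proof (exp_pos (- (cc t n * b))).
  assert ((1 - exp (- (cc t n * b))) / cc t n <= / cc t n).
  { unfold Rdiv. rewrite <- (Rmult_1_l (/ cc t n)) at 2. apply Rmult_le_compat_r.
    left; apply Rinv_0_lt_compat; lra. lra. }
  lra.
Qed.

Lemma qsum_beta t m : 0 < t -> sum_f_R0 (beta_term (t/2+1)) m = 2 * qsum t (S m).
Proof.
  intros ht. induction m as [|m IH].
  - simpl. unfold beta_term, cc. simpl. field. lra.
  - cbn [sum_f_R0]. rewrite IH. cbn [qsum].
    unfold beta_term, cc. pose proof (pos_INR (S m)). pose proof (pos_INR m). field. split; lra.
Qed.

Lemma qsum_lim t d : 0 < t -> 0 < d -> exists N, forall n, (n >= N)%nat ->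
  Rabs (qsum t n - beta (t/2+1) / 2) < d.
Proof.
  intros ht hd.
  destruct (beta_sum (t/2+1) ltac:(lra) (2*d) ltac:(lra)) as [N HN].
  exists (S N). intros n hn. destruct n as [|m]; [lia|].
  specialize (HN m ltac:(lia)). unfold Rdist in HN. rewrite qsum_beta in HN by exact ht.
  replace (2 * qsum t (S m) - beta (t / 2 + 1)) with (2 * (qsum t (S m) - beta (t / 2 + 1) / 2)) in HN by field.
  rewrite Rabs_mult, Rabs_right in HN by lra. lra.
Qed.

Lemma JJ0_close t b n : 0 < t -> 0 <= b ->
  Rabs (JJ t 0 b - beta (t/2+1)/2) <=
  Rabs (qsum t n - beta (t/2+1)/2) + INR n * (exp (- (t * b)) / t) + / cc t n.
Proof.
  intros ht hb.
  rewrite (JJ0_expand t b n ht), (psum_split t b n ht).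
  pose proof (rsum_bound t b n ht hb). pose proof (JJn_bound t n b ht hb).
  replace (qsum t n - rsum t b n + (-1) ^ n * JJ t n b - beta (t / 2 + 1) / 2)
    with ((qsum t n - beta (t / 2 + 1) / 2) + (- rsum t b n) + (-1) ^ n * JJ t n b) by ring.
  eapply Rle_trans; [apply Rabs_triang|].
  rewrite Rabs_mult, pow_1_abs, Rmult_1_l.
  rewrite (Rabs_right (JJ t n b)) by lra.
  pose proof (Rabs_triang (qsum t n - beta (t / 2 + 1) / 2) (- rsum t b n)).
  rewrite Rabs_Ropp in H1. lra.
Qed.


Theorem corollary2 :
  (forall t : R, 0 < t ->
     exists L : R,
       improper_integral_0_inf (fun s => ln (cosh s) * exp (- (t * s))) L /\
       - (t ^ 2) * L = 1 - t * beta (t / 2) /\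
       - (t ^ 2) * L = t * beta (t / 2 + 1) - 1) /\
  (forall s : R, 0 < s -> beta s + beta (s + 1) = 1 / s).
Proof.
  split; [|exact beta_rec].
  intros t ht.
  assert (Hrec := beta_rec (t/2) ltac:(lra)).
  exists (1 / t ^ 2 - beta (t/2+1) / t).
  split; [|split].
  2:{ assert (beta (t/2) = 1/(t/2) - beta (t/2+1)) by lra. rewrite H. field. lra. }
  2:{ field. lra. }
  exists (fun b => ex_RInt_Reals_0 _ _ _ (gg_ex t b)).
  intros eps he.
  set (bt := beta (t/2+1)).
  set (d := eps * t / 8).
  assert (hd : 0 < d) by (unfold d; nra).
  destruct (qsum_lim t d ht hd) as [N1 HN1].
  destruct (archimed_cor1 d hd) as [N2 [HN2 HN2p]].
  set (n := (N1 + N2)%nat).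
  assert (Hq : Rabs (qsum t n - bt / 2) < d) by (apply HN1; unfold n; lia).
  assert (Hc : / cc t n < d).
  { apply Rle_lt_trans with (/ INR N2); [|exact HN2].
    assert (0 < INR N2) by (apply lt_0_INR; lia).
    assert (INR N2 <= INR n) by (apply le_INR; unfold n; lia).
    apply Rinv_le_contravar; [lra|]. unfold cc. lra. }
  set (D := 1/t + 1/t^2 + 2 * INR n / t^2).
  assert (HD : 0 <= D).
  { unfold D. pose proof (pos_INR n). assert (0 < 1/t) by (apply Rdiv_lt_0_compat; lra).
    assert (0 < 1/t^2) by (apply Rdiv_lt_0_compat; nra).
    assert (0 <= 2 * INR n / t^2) by (apply Rmult_le_pos; [lra|left; apply Rinv_0_lt_compat; nra]). lra. }
  assert (Httpos : 0 < t * t) by nra.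
  exists (1 + 16 * D / (t * t * eps)).
  intros b hb.
  assert (HB0 : 0 <= 16 * D / (t * t * eps)).
  { apply Rmult_le_pos; [lra|left; apply Rinv_0_lt_compat; nra]. }
  assert (hb1 : 1 <= b) by lra.
  rewrite <- RInt_Reals.
  change (RInt (fun s : R => ln (cosh s) * exp (- (t * s))) 0 b) with (RInt (gg t) 0 b).
  rewrite (RInt_gg t b ht).
  unfold GG, AA.
  change (ln ((exp b + exp (- b)) / 2)) with (ln (cosh b)).
  set (u := exp (- (t * b))).
  assert (hu0 : 0 < u) by apply exp_pos.
  destruct (lncosh_bounds b ltac:(lra)) as [Hl0 Hl1].
  set (lc := ln (cosh b)) in *.
  assert (HJ := JJ0_close t b n ht ltac:(lra)). fold bt in HJ. fold u in HJ.
  set (J := JJ t 0 b) in *.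
  assert (Hu : u <= 4 / (t * b * (t * b))) by (apply exp_neg_bound; nra).
  assert (E1 : 4 / (t * b * (t * b)) = 4 / (t * t * b) * / b) by (field; lra).
  assert (Hinvb : 0 < / b <= 1).
  { split; [apply Rinv_0_lt_compat; lra|]. rewrite <- Rinv_1. apply Rinv_le_contravar; lra. }
  assert (Hk : 0 < 4 / (t * t * b)) by (apply Rdiv_lt_0_compat; nra).
  assert (Hu1 : u <= 4 / (t * t * b)) by nra.
  assert (Hub : u * b <= 4 / (t * t * b)).
  { apply Rle_trans with (4 / (t * b * (t * b)) * b); [apply Rmult_le_compat_r; lra|].
    right. field. lra. }
  assert (HCD : 4 / (t * t * b) * D <= eps / 4).
  { assert (E2 : 4 / (t * t * b) * D = (16 * D / (t * t * eps)) * (eps / 4) * / b) by (field; repeat split; lra).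
    rewrite E2.
    assert (16 * D / (t * t * eps) <= b) by lra.
    apply Rle_trans with (b * (eps / 4) * / b).
    - apply Rmult_le_compat_r; [lra|]. apply Rmult_le_compat_r; lra.
    - right. field. lra. }
  assert (Hit : 0 < / t) by (apply Rinv_0_lt_compat; lra).
  assert (T1 : u * lc / t <= u * b * (1 / t)).
  { unfold Rdiv. rewrite Rmult_1_l. apply Rmult_le_compat_r; [lra|]. apply Rmult_le_compat_l; lra. }
  assert (T2 : Rabs (J - bt/2) <= 2 * d + INR n * (u / t)) by lra.
  replace (- u * lc / t + (1 - u) / t ^ 2 - 2 / t * J - (1 / t ^ 2 - bt / t))
    with (- (u * lc / t) - u * (1 / t ^ 2) - 2 / t * (J - bt / 2)) by (field; lra).
  assert (Habs : Rabs (- (u * lc / t) - u * (1 / t ^ 2) - 2 / t * (J - bt / 2)) <=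
                 u * lc / t + u * (1 / t ^ 2) + 2 / t * Rabs (J - bt / 2)).
  { unfold Rminus. eapply Rle_trans; [apply Rabs_triang|].
    rewrite Rabs_Ropp, Rabs_mult, (Rabs_right (2/t)) by (apply Rle_ge, Rlt_le, Rdiv_lt_0_compat; lra).
    eapply Rplus_le_compat_r. eapply Rle_trans; [apply Rabs_triang|].
    rewrite !Rabs_Ropp, !Rabs_right; [lra| |].
    - apply Rle_ge, Rmult_le_pos; [lra|left; apply Rdiv_lt_0_compat; nra].
    - apply Rle_ge. unfold Rdiv. apply Rmult_le_pos; [nra|lra]. }
  assert (T3 : 2 / t * Rabs (J - bt / 2) <= 2 / t * (2 * d) + u * (2 * INR n / t ^ 2)).
  { apply Rle_trans with (2 / t * (2 * d + INR n * (u / t))).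
    - apply Rmult_le_compat_l; [left; apply Rdiv_lt_0_compat; lra|exact T2].
    - right. field. lra. }
  assert (T4 : 2 / t * (2 * d) = eps / 2) by (unfold d; field; lra).
  assert (T5 : u * b * (1 / t) + u * (1 / t ^ 2) + u * (2 * INR n / t ^ 2) <= 4 / (t * t * b) * D).
  { unfold D.
    assert (0 < 1/t) by (apply Rdiv_lt_0_compat; lra).
    assert (0 < 1/t^2) by (apply Rdiv_lt_0_compat; nra).
    assert (0 <= 2 * INR n / t^2) by (pose proof (pos_INR n); apply Rmult_le_pos; [lra|left; apply Rinv_0_lt_compat; nra]).
    assert (u * b * (1/t) <= 4 / (t * t * b) * (1/t)) by (apply Rmult_le_compat_r; lra).
    assert (u * (1/t^2) <= 4 / (t * t * b) * (1/t^2)) by (apply Rmult_le_compat_r; lra).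
    assert (u * (2 * INR n / t^2) <= 4 / (t * t * b) * (2 * INR n / t^2)) by (apply Rmult_le_compat_r; lra).
    lra. }
  lra.
Qed.
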